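(* Let $\mathcal{M}$ be a set of mappings over a database schema $\Sigma$. Then $\mathcal{M}\equiv\mathrm{split}(\mathcal{M})$.
   Context: A mapping is $L(\vec t) \leftsquigarrow U(\vec x)$ with $L$ a concept or role name, $\vec t$ a tuple of terms over the variables $\vec x$ (built with function symbols, or plain variables), and $U$ a view name whose extension $U^{\mathcal{D}}$ on a database instance $\mathcal{D}$ of $\Sigma$ is given by a query (possibly a non-recursive Datalog query with function symbols, whose answers may be tuples of terms $f(\vec a)$). The virtual ABox is $\mathcal{A}_{(\mathcal{M},\mathcal{D})}=\{L(\vec t\,[\vec x\mapsto\vec a])\mid L(\vec t)\leftsquigarrow U(\vec x)\in\mathcal{M},\ \vec a\in U^{\mathcal{D}}\}$, and $\mathcal{M}\equiv\mathcal{M}'$ means $\mathcal{A}_{(\mathcal{M},\mathcal{D})}=\mathcal{A}_{(\mathcal{M}',\mathcal{D})}$ for every instance $\mathcal{D}$ of $\Sigma$. Split: if $m=L(\vec x)\leftsquigarrow U(\vec x)$ where $U$ is a view name for a non-recursive Datalog query $(U(\vec x),\{U(\vec f_i(\vec x_i))\leftarrow V_i(\vec x_i)\mid 1\le i\le n\})$ (each $V_i(\vec x_i)$ possibly a conjunction of view atoms), then $\mathrm{split}(m)=\{L(\vec f_i(\vec x_i))\leftsquigarrow V_i(\vec x_i)\mid 1\le i\le n\}$; for any mapping $m'$ not of this form, $\mathrm{split}(m')=\{m'\}$. For a set, $\mathrm{split}(\mathcal{M})=\bigcup_{m\in\mathcal{M}}\mathrm{split}(m)$. *)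

(* Defs.v *)
From Stdlib Require List.
From mathcomp Require Import all_boot.
Set Implicit Arguments.
Unset Strict Implicit.
Unset Printing Implicit Defensive.

(* Ground terms (values that may occur in view answers / ABox assertions):
   constants from C, and function symbols from F applied to tuples. *)
Inductive term (C F : Type) : Type :=
  | Const (c : C)
  | App (f : F) (ts : seq (term C F)).

Inductive oterm (F : Type) : Type :=
  | Var (x : nat)
  | OApp (f : F) (ts : seq (oterm F)).

Arguments Var {F} x.

Fixpoint osubst (C F : Type) (s : nat -> term C F) (t : oterm F) : term C F :=
  match t with
  | Var x => s x
  | OApp f ts => App f (map (osubst s) ts)
  end.

Definition atom (V : Type) : Type := (V * seq nat)%type.

(* A conjunction of view atoms holds under the assignment s in instance D,
   where ext D W is the extension W^D of the view name W. *)
Definition holds (C F V Inst : Type) (ext : Inst -> V -> seq (term C F) -> Prop)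
  (D : Inst) (s : nat -> term C F) (body : seq (atom V)) : Prop :=
  forall a, List.In a body -> ext D a.1 (map s a.2).

(* A Datalog rule  U(heads) <- body  (the head predicate U is implicit:
   it is the view whose definition the rule belongs to). *)
Record rule (F V : Type) : Type := Rule {
  rhead : seq (oterm F);
  rbody : seq (atom V) }.

(* A mapping  L(targ) ~> src, with src a conjunction of view atoms
   (a single atom U(x) in the basic case). *)
Record mapping (F V A : Type) : Type := Mapping {
  mlab  : A;                 (* concept or role name L *)
  mtarg : seq (oterm F);
  msrc  : seq (atom V) }.

(* Semantics of the views defined by non-recursive Datalog queries:
   def U = Some rules means U is the view name of the query
   (U(x), {U(f_i(x_i)) <- V_i(x_i)}); its extension on every instance D is
   then the union over the rules of the instantiated rule heads. *)
Definition datalog_sem (C F V Inst : Type)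
  (ext : Inst -> V -> seq (term C F) -> Prop)
  (def : V -> option (seq (rule F V))) : Prop :=
  forall D U rules, def U = Some rules ->
  forall a, ext D U a <->
    exists2 r, List.In r rules &
      exists s, holds ext D s (rbody r) /\ a = map (osubst s) (rhead r).

Definition vabox (C F V A Inst : Type) (ext : Inst -> V -> seq (term C F) -> Prop)
  (M : mapping F V A -> Prop) (D : Inst) : (A * seq (term C F)) -> Prop :=
  fun asr => exists2 m, M m &
    exists s, holds ext D s (msrc m) /\ asr = (mlab m, map (osubst s) (mtarg m)).

Definition mequiv (C F V A Inst : Type) (ext : Inst -> V -> seq (term C F) -> Prop)
  (M M' : mapping F V A -> Prop) : Prop :=
  forall D asr, vabox ext M D asr <-> vabox ext M' D asr.

(* m is of the form L(x) ~> U(x) with x a tuple of distinct variables and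
   U a view name defined by a non-recursive Datalog query with rules [rules]
   (U(x), {U(f_i(x_i)) <- V_i(x_i)}); the rule heads f_i(x_i) are tuples of
   the same arity as x (well-formedness of the query). *)
Definition split_form (F V A : Type) (def : V -> option (seq (rule F V)))
  (m : mapping F V A) (rules : seq (rule F V)) : Prop :=
  exists U xs, [/\ uniq xs, mtarg m = map Var xs, msrc m = [:: (U, xs)],
                   def U = Some rules
                 & forall r, List.In r rules -> size (rhead r) = size xs].

Definition split1 (F V A : Type) (def : V -> option (seq (rule F V)))
  (m : mapping F V A) : mapping F V A -> Prop :=
  fun m' =>
    (exists rules, split_form def m rules /\
       exists2 r, List.In r rules & m' = Mapping (mlab m) (rhead r) (rbody r))
    \/ ((~ exists rules, split_form def m rules) /\ m' = m).

Definition msplit (F V A : Type) (def : V -> option (seq (rule F V)))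
  (M : mapping F V A -> Prop) : mapping F V A -> Prop :=
  fun m' => exists2 m, M m & split1 def m m'.

(* Main.v *)
Require Import Defs.
From Stdlib Require Import Classical_Prop.
From mathcomp Require Import all_boot.

Lemma map_index_nth (T : Type) (d : T) (xs : seq nat) (l : seq T) :
  uniq xs -> size l = size xs ->
  map (fun x => nth d l (index x xs)) xs = l.
Proof.
move=> u hs; apply: (@eq_from_nth _ d); first by rewrite size_map hs.
move=> i; rewrite size_map => hi.
rewrite (nth_map 0%N) // index_uniq //.
Qed.

Theorem corollary1 (C F V A Inst : Type)
  (ext : Inst -> V -> seq (term C F) -> Prop)
  (def : V -> option (seq (rule F V)))
  (Hsem : datalog_sem ext def)
  (M : mapping F V A -> Prop) :
  mequiv ext M (msplit def M).
Proof.
move=> D asr; split.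
- case=> m Mm [s [hs ->]].
  have [[rules hf]|nf] := Classical_Prop.classic (exists rules, split_form def m rules).
  + have hf' := hf; case: hf' => U [xs [u ht hsrc hdef hsz]].
    have hU : ext D U (map s xs).
      by apply: (hs (U, xs)); rewrite hsrc; left.
    have [r rin [s' [hb heq]]] := (proj1 (Hsem D U rules hdef _) hU).
    exists (Mapping (mlab m) (rhead r) (rbody r)).
      by exists m => //; left; exists rules; split => //; exists r.
    exists s'; split => //=.
    by rewrite ht -map_comp /= heq.
  + exists m; first by exists m => //; right.
    by exists s.
- case=> m' [m Mm hsp] [s' [hs' ->]].
  case: hsp hs' => [[rules [hf [r rin ->]]] | [_ ->]] hs'.
  + case: hf => U [xs [u ht hsrc hdef hsz]].
    exists m => //.
    pose l := map (osubst s') (rhead r).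
    pose s := fun x => nth (s' 0%N) l (index x xs).
    have hl : map s xs = l by apply: map_index_nth => //; rewrite size_map hsz.
    exists s; split.
      rewrite hsrc => a [<-|[]] /=; rewrite hl.
      apply/(Hsem D U rules hdef); exists r => //; exists s'; split => //; exact: hs'.
    by rewrite /= ht -map_comp /= hl.
  + by exists m => //; exists s'.
Qed.
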